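(* Define polynomials $K_n(\lambda)$, $n\ge0$, by $K_0=2$, $K_1=1$, $K_2=\lambda-2$, $K_3=\lambda-3$, and for $p\ge2$, $K_{2p+1}=(\lambda-2)K_{2p-1}-K_{2p-3}$ and $K_{2p}=(\lambda-2)K_{2p-2}-K_{2p-4}$. Then for $n\ge3$, $K_n$ has degree $\lfloor n/2\rfloor$ and $$\mathcal{K}_n(\lambda)=\lambda^{\lfloor (n+1)/2\rfloor}K_n(\lambda).$$
   Context: $\mathcal{K}_n(\lambda)=\det(\lambda I_n-M_n)$ where $M_n$ is the $n\times n$ matrix with $(M_n)_{j,i}=1$ if $i\ge j-1$ or $(j,i)=(n,n-2)$, and $0$ otherwise. *)

(* Defs.v *)
From mathcomp Require Import all_boot all_order all_algebra.
Set Implicit Arguments. Unset Strict Implicit. Unset Printing Implicit Defensive.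
Import GRing.Theory.
Local Open Scope ring_scope.

(* The polynomials K_n over the integers:
   K_0 = 2, K_1 = 1, K_2 = X - 2, K_3 = X - 3,
   K_{m+4} = (X - 2) K_{m+2} - K_m  (covers both parity recursions, p >= 2). *)
Fixpoint Kpoly (n : nat) : {poly int} :=
  match n with
  | 0 => 2%:P
  | 1 => 1
  | 2 => 'X - 2%:P
  | 3 => 'X - 3%:P
  | (m.+2 as k).+2 => ('X - 2%:P) * Kpoly k - Kpoly m
  end.

(* M_n, 0-indexed: (M_n)_{j,i} = 1 iff i >= j-1 (i.e. j <= i+1)
   or (j,i) = (n-1, n-3) (the 1-indexed entry (n, n-2)). *)
Definition Mmat (n : nat) : 'M[int]_n :=
  \matrix_(j < n, i < n)
    (if ((j <= i.+1)%N || ((j == n.-1 :> nat) && (i == (n - 3)%N :> nat))) then 1 else 0).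

Definition calK (n : nat) : {poly int} := char_poly (Mmat n).

(* Main.v *)
Require Import Defs.
From mathcomp Require Import all_boot all_order all_algebra.
From mathcomp Require Import zify ring.
Set Implicit Arguments. Unset Strict Implicit. Unset Printing Implicit Defensive.
Import GRing.Theory.
Local Open Scope ring_scope.

Definition Ment (n j i : nat) : bool := (j <= i.+1)%N || ((j == n.-1) && (i == n - 3)%N).

Definition Am (n : nat) : 'M[{poly int}]_n :=
  \matrix_(j < n, i < n) ((if j == i then 'X else 0) - (if Ment n j i then 1 else 0)).

Lemma calK_Am n : calK n = \det (Am n).
Proof.
rewrite /calK /char_poly; congr (\det _); apply/matrixP => j i.
rewrite !mxE /Ment; case: eqP => [->|_]; case: ifP => _ //=; rewrite ?polyC1 ?polyC0 ?mulr1n ?mulr0n //.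
Qed.

Lemma Ment_shift k j i : (j < k)%N -> (i < k)%N -> Ment k.+1 j.+1 i.+1 = Ment k j i.
Proof.
move=> hj hi; rewrite /Ment /=.
case: (leqP j i.+1) => h1 /=; first by rewrite ltnS h1.
rewrite ltnS (_ : (j <= i.+1)%N = false) /=; last lia.
apply/idP/idP => /andP [/eqP a /eqP b]; apply/andP; split; apply/eqP; lia.
Qed.

Lemma minor00 k : row' ord0 (col' ord0 (Am k.+1)) = Am k.
Proof.
apply/matrixP => j i; rewrite !mxE /= Ment_shift //.
Qed.

Definition Cm k : 'M[{poly int}]_k.+1 :=
  \matrix_(j, i) (if j == ord0 then (if i == ord0 then 1 else 0) else Am k.+1 j i).

Lemma detCm k : \det (Cm k) = \det (Am k).
Proof.
rewrite (expand_det_row _ ord0) big_ord_recl big1 ?addr0; last first.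
  by move=> i _; rewrite !mxE /= mul0r.
rewrite /cofactor !mxE /= expr0 !mul1r -(minor00 k); congr (\det _).
by apply/matrixP => j i; rewrite !mxE.
Qed.

Lemma rec m : \det (Am m.+4) = 'X * \det (Am m.+3) - 'X * \det (Am m.+2).
Proof.
rewrite (expand_det_col _ ord0) big_ord_recl big_ord_recl big1 ?addr0; last first.
  move=> i _; rewrite !mxE /= /Ment /=.
  case: ifP => [/andP[_ /eqP]|_]; [lia|by rewrite subrr mul0r].
rewrite /cofactor minor00 !mxE /bump /= expr0 expr1.
rewrite [X in _ + _ * (_ * X)](@determinant_multilinear _ _ _ (Am m.+3) (Cm m.+2) ord0 1 (- 'X)).
- rewrite detCm. ring.
- apply/matrixP => j i; rewrite !mxE /= /Ment /=.
  rewrite [ord0 == i]eq_sym; case: (i == ord0) => /=; ring.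
- apply/matrixP => j i; rewrite !mxE /= -!val_eqE /= /bump /= !add1n Ment_shift // ltnS; exact: ltn_ord.
- apply/matrixP => j i; rewrite !mxE /= -!val_eqE /= /bump /= !add1n Ment_shift // ltnS; exact: ltn_ord.
Qed.


Lemma det2 : \det (Am 2) = 'X * ('X - 2%:P).
Proof.
rewrite (expand_det_col _ ord0) !big_ord_recl big_ord0 /cofactor !det_mx11 !mxE /=.
rewrite ?big_ord0 /bump /=. ring.
Qed.
Lemma det3 : \det (Am 3) = 'X^2 * ('X - 3%:P).
Proof.
rewrite (expand_det_col _ ord0) !big_ord_recl big_ord0 /cofactor.
rewrite !(expand_det_col _ ord0) !big_ord_recl big_ord0 /cofactor !det_mx11 !mxE /=.
rewrite ?big_ord0 /bump /=. ring.
Qed.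

Lemma Kmixed m : Kpoly (m.*2.+2) = 'X * Kpoly (m.*2.+1) - Kpoly (m.*2)
  /\ Kpoly (m.*2.+3) = Kpoly (m.*2.+2) - Kpoly (m.*2.+1).
Proof.
elim: m => [|m [IH1 IH2]]; first by split => /=; ring.
have e4 : Kpoly (m.+1.*2.+2) = ('X - 2%:P) * Kpoly (m.*2.+2) - Kpoly (m.*2) by [].
have e5 : Kpoly (m.+1.*2.+3) = ('X - 2%:P) * Kpoly (m.*2.+3) - Kpoly (m.*2.+1) by [].
have e0 : Kpoly (m.*2) = 'X * Kpoly (m.*2.+1) - Kpoly (m.*2.+2) by rewrite IH1; ring.
have -> : m.+1.*2.+1 = m.*2.+3 by [].
have -> : m.+1.*2 = m.*2.+2 by [].
split.
- rewrite e4 e0 IH2; ring.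
- rewrite e5 e4 e0 IH2; ring.
Qed.

Lemma sizeB1 (p q : {poly int}) : (size q < size p)%N -> lead_coef p = 1 ->
  size (p - q) = size p /\ lead_coef (p - q) = 1.
Proof.
move=> h l; rewrite size_polyDl ?lead_coefDl ?size_polyN //.
Qed.

Lemma Kdeg p : size (Kpoly p.*2.+1) = p.+1 /\ lead_coef (Kpoly p.*2.+1) = 1
  /\ size (Kpoly p.*2.+2) = p.+2 /\ lead_coef (Kpoly p.*2.+2) = 1.
Proof.
elim: p => [|p [s1 [l1 [s2 l2]]]].
  by rewrite /= size_XsubC lead_coefXsubC size_poly1 lead_coef1.
have [a b] := Kmixed p; have [a' b'] := Kmixed p.+1.
have -> : p.+1.*2.+1 = p.*2.+3 by [].
rewrite b; have [s3 l3] := sizeB1 (p := Kpoly p.*2.+2) (q := Kpoly p.*2.+1) (ltac:(rewrite s1 s2 //)) l2.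
rewrite s3 l3 s2; do 2 split => //.
have -> : p.+1.*2.+2 = p.+1.*2.+2 by [].
rewrite a'.
have -> : p.+1.*2.+1 = p.*2.+3 by [].
have -> : p.+1.*2 = p.*2.+2 by [].
rewrite b.
have nz : Kpoly p.*2.+2 - Kpoly p.*2.+1 != 0.
  by rewrite -size_poly_eq0 s3 s2.
rewrite mulrC; have [s4 l4] := sizeB1 (p := (Kpoly p.*2.+2 - Kpoly p.*2.+1) * 'X) (q := Kpoly p.*2.+2)
  (ltac:(rewrite size_mulX // s3 s2 //)) (ltac:(rewrite lead_coefMX //)).
by rewrite s4 size_mulX // s3 s2 l4.
Qed.

Lemma cK p : \det (Am p.*2.+3) = 'X^(p.+2) * Kpoly p.*2.+3
  /\ \det (Am p.*2.+4) = 'X^(p.+2) * Kpoly p.*2.+4.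
Proof.
elim: p => [|p [IH1 IH2]].
  rewrite /= det3 (rec 0) det3 det2 /=; split; ring.
have [_ b] := Kmixed p.+1; have [a _] := Kmixed p.+2.
have e1 : p.+1.*2.+3 = (p.*2.+1).+4 by [].
have e2 : p.+1.*2.+4 = (p.*2.+2).+4 by [].
rewrite e1 (rec (p.*2.+1)).
rewrite IH1 IH2.
have E3 : Kpoly (p.*2.+1).+4 = Kpoly p.*2.+4 - Kpoly p.*2.+3 by rewrite -e1 b.
split; first by rewrite E3 !exprS; ring.
rewrite (rec (p.*2.+2)).
rewrite (rec (p.*2.+1)).
rewrite IH1 IH2.
have E4 : Kpoly (p.*2.+2).+4 = 'X * Kpoly (p.*2.+1).+4 - Kpoly p.*2.+4 by rewrite -e2 a.
rewrite E4 E3 !exprS; ring.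
Qed.

Theorem proposition4 (n : nat) (hn : (3 <= n)%N) :
  (size (Kpoly n)).-1 = n./2 /\ calK n = 'X^((n.+1)./2) * Kpoly n.
Proof.
rewrite calK_Am.
have h := odd_double_half (n - 3).
move: h; move: (odd (n - 3)) ((n - 3)./2) => b p.
case: b => h.
- have -> : n = p.*2.+4 by lia.
  have [_ e] := cK p.
  have [_ [_ [s _]]] := Kdeg p.+1.
  change (p.+1.*2.+2) with (p.*2.+4) in s.
  rewrite s e; split.
    by rewrite -[p.*2.+4]/((p.+2).*2) doubleK.
  by rewrite -[(p.*2.+4).+1]/(true + (p.+2).*2)%N half_bit_double.
- have -> : n = p.*2.+3 by lia.
  have [e _] := cK p.
  have [s _] := Kdeg p.+1.
  change (p.+1.*2.+1) with (p.*2.+3) in s.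
  rewrite s e; split.
    by rewrite -[p.*2.+3]/(true + (p.+1).*2)%N half_bit_double.
  by rewrite -[(p.*2.+3).+1]/((p.+2).*2) doubleK.
Qed.
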